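(* Let $X$ be a simple complex abelian surface with principal polarization $L_0$ and indefinite quaternion multiplication, with $\mathrm{End}(X)=\mathbb Z\oplus\mathbb Za\oplus\mathbb Zb\oplus\mathbb Zab$ for primitive elements $a,b$ invariant under the Rosati involution of $L_0$. Then $\mathrm{NS}(X)$ has lattice basis $L_0,L_a,L_b$ (where $\phi_{L_0}^{-1}\phi_{L_a}=a$, $\phi_{L_0}^{-1}\phi_{L_b}=b$) with intersection matrix $$\begin{pmatrix}2&t(a)&t(b)\\ t(a)&2n(a)&n(a,b)\\ t(b)&n(a,b)&2n(b)\end{pmatrix},$$ and the discriminant of $\mathrm{NS}(X)$ equals $\tfrac12\det S_\delta(a,b)$.
   Context: $t(x)$, $n(x)$ are the reduced trace and reduced norm in the quaternion algebra $\mathrm{End}_{\mathbb Q}(X)$; $n(x,y)=n(x+y)-n(x)-n(y)$; $\delta(x,y)=t(x)t(y)-2n(x,y)$, $\delta(x)=\delta(x,x)$; $S_\delta(a,b)=\begin{pmatrix}\delta(a)&\delta(a,b)\\ \delta(a,b)&\delta(b)\end{pmatrix}$. $\phi_L:X\to\hat X$ is the homomorphism associated to $L$, and $L\mapsto\phi_{L_0}^{-1}\phi_L$ identifies $\mathrm{NS}(X)$ with the Rosati-symmetric endomorphisms. The discriminant is the determinant of the Gram matrix of the intersection form in a lattice basis. *)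

(* Defs.v *)
(* A complex abelian surface X = V/Lambda is modelled by its
   real coordinates: Lambda = Z^4 (standard lattice in R^4 = V) and a complex
   structure J on R^4 (J^2 = -1, multiplication by i). *)
From HB Require Import structures.
From mathcomp Require Import all_boot all_order all_algebra.
From mathcomp Require Import boolp reals.
Set Implicit Arguments. Unset Strict Implicit. Unset Printing Implicit Defensive.
Import Order.TTheory GRing.Theory Num.Theory.
Local Open Scope ring_scope.

Definition intmx (R : realType) (m n : nat) (M : 'M[int]_(m, n)) : 'M[R]_(m, n) :=
  map_mx (fun z : int => z%:~R) M.

Definition complex_structure (R : realType) (J : 'M[R]_4) : Prop :=
  J *m J = - 1%:M.

(* End(X): lattice-preserving (integral) maps that are C-linear *)
Definition is_end (R : realType) (J : 'M[R]_4) (M : 'M[int]_4) : Prop :=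
  intmx R M *m J = J *m intmx R M.

(* NS(X) (Appell-Humbert): integral alternating forms E(u,v) = u^T E v on the
   lattice with E(Ju,Jv) = E(u,v); E is the first Chern class of L. *)
Definition in_NS (R : realType) (J : 'M[R]_4) (E : 'M[int]_4) : Prop :=
  E^T = - E /\ J^T *m intmx R E *m J = intmx R E.

(* positivity of the hermitian form H(v,v) = E(iv,v) *)
Definition positive_form (R : realType) (J : 'M[R]_4) (E : 'M[int]_4) : Prop :=
  forall v : 'cV[R]_4, v != 0 -> 0 < ((J *m v)^T *m intmx R E *m v) ord0 ord0.

(* principal polarization: ample class with deg phi_L = det E = 1 *)
Definition principal_polarization (R : realType) (J : 'M[R]_4) (E0 : 'M[int]_4)
  : Prop := [/\ in_NS J E0, positive_form J E0 & \det E0 = 1].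

(* X simple: no 1-dimensional complex subtorus, i.e. no real 2-plane spanned by
   lattice vectors that is J-stable *)
Definition simple_torus (R : realType) (J : 'M[R]_4) : Prop :=
  ~ exists U : 'M[int]_(4, 2),
      \rank (intmx R U) = 2%N /\ exists C : 'M[R]_2, J *m intmx R U = intmx R U *m C.

(* complex orientation of R^4: sign of det (u, Ju, w, Jw) for a C-basis u, w *)
Definition cbasis_mx (R : realType) (J : 'M[R]_4) (u w : 'cV[R]_4) : 'M[R]_4 :=
  \matrix_(i < 4, j < 4)
    match nat_of_ord j with
    | 0 => u i ord0 | 1 => (J *m u) i ord0 | 2 => w i ord0 | _ => (J *m w) i ord0
    end.

Definition complex_orientation (R : realType) (J : 'M[R]_4) : int :=
  if `[< exists u w : 'cV[R]_4, 0 < \det (cbasis_mx J u w) >] then 1 else -1.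

(* coefficient of dx0^dx1^dx2^dx3 in E ^ F, E,F viewed as constant 2-forms
   sum_{i<j} E_ij dx_i ^ dx_j *)
Definition wedge (E F : 'M[int]_4) : int :=
  let e i j := E (@inord 3 i) (@inord 3 j) in
  let f i j := F (@inord 3 i) (@inord 3 j) in
  e 0 1 * f 2 3 - e 0 2 * f 1 3 + e 0 3 * f 1 2
  + e 1 2 * f 0 3 - e 1 3 * f 0 2 + e 2 3 * f 0 1.

(* intersection number (L.M) = integral over X of c1(L) ^ c1(M), X oriented
   by its complex structure (the lattice Z^4 has covolume 1) *)
Definition inter (R : realType) (J : 'M[R]_4) (E F : 'M[int]_4) : int :=
  complex_orientation J * wedge E F.

Definition rosati_invariant (R : realType) (E0 f : 'M[int]_4) : Prop :=
  invmx (intmx R E0) *m (intmx R f)^T *m intmx R E0 = intmx R f.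

Definition end_ring_basis (R : realType) (J : 'M[R]_4) (a b : 'M[int]_4) : Prop :=
  [/\ is_end J a, is_end J b,
      (forall M : 'M[int]_4, is_end J M <->
         exists k0 k1 k2 k3 : int, M = k0%:M + k1 *: a + k2 *: b + k3 *: (a *m b))
    & (forall k0 k1 k2 k3 : int, k0%:M + k1 *: a + k2 *: b + k3 *: (a *m b) = 0 ->
         [/\ k0 = 0, k1 = 0, k2 = 0 & k3 = 0])].

Definition primitive_end (R : realType) (J : 'M[R]_4) (a : 'M[int]_4) : Prop :=
  forall (m : int) (M : 'M[int]_4), is_end J M -> a = m *: M -> m = 1 \/ m = -1.

(* End_Q(X) (x) R, realised as the R-span of 1, a, b, ab in M_4(R) *)
Definition in_Rspan (R : realType) (a b : 'M[int]_4) (x : 'M[R]_4) : Prop :=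
  exists r0 r1 r2 r3 : R,
    x = r0%:M + r1 *: intmx R a + r2 *: intmx R b + r3 *: intmx R (a *m b).

(* psi : M_2(R) ~= End_Q(X) (x) R, an isomorphism of R-algebras
   (existence of psi = the quaternion algebra End_Q(X) is indefinite) *)
Definition real_splitting (R : realType) (a b : 'M[int]_4)
  (psi : 'M[R]_2 -> 'M[R]_4) : Prop :=
  [/\ forall (r : R) (x y : 'M[R]_2), psi (r *: x + y) = r *: psi x + psi y,
      forall x y : 'M[R]_2, psi (x *m y) = psi x *m psi y,
      psi 1%:M = 1%:M
    & injective psi] /\
  ((forall x, in_Rspan a b (psi x)) /\
   (forall z, in_Rspan a b z -> exists x, psi x = z)).

(* reduced trace / norm computed in the splitting M_2(R):
   t(x) = tr(psi^-1 x), n(x) = det(psi^-1 x) *)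
Definition rtr (R : realType) (y : 'M[R]_2) : R := \tr y.
Definition rnorm (R : realType) (y : 'M[R]_2) : R := \det y.
Definition rnorm2 (R : realType) (y z : 'M[R]_2) : R :=
  rnorm (y + z) - rnorm y - rnorm z.
Definition rdelta (R : realType) (y z : 'M[R]_2) : R :=
  rtr y * rtr z - 2 * rnorm2 y z.
Definition Sdelta (R : realType) (y z : 'M[R]_2) : 'M[R]_2 :=
  \matrix_(i < 2, j < 2)
    match nat_of_ord i, nat_of_ord j with
    | 0, 0 => rdelta y y | 1, 1 => rdelta z z | _, _ => rdelta y z end.

Definition three (T : Type) (x y z : T) (i : 'I_3) : T :=
  match nat_of_ord i with 0 => x | 1 => y | _ => z end.

Definition NS_lattice_basis (R : realType) (J : 'M[R]_4) (L : 'I_3 -> 'M[int]_4)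
  : Prop :=
  [/\ forall i, in_NS J (L i),
      forall E, in_NS J E -> exists k : 'I_3 -> int, E = \sum_i k i *: L i
    & forall k : 'I_3 -> int, \sum_i k i *: L i = 0 -> forall i, k i = 0].

Definition NS_gram (R : realType) (J : 'M[R]_4) (L : 'I_3 -> 'M[int]_4) : 'M[int]_3 :=
  \matrix_(i < 3, j < 3) inter J (L i) (L j).

(* Main.v *)
Require Import Defs.
From HB Require Import structures.
From mathcomp Require Import all_boot all_order all_algebra.
From mathcomp Require Import boolp reals.
From mathcomp Require Import ring lra.
Set Implicit Arguments. Unset Strict Implicit. Unset Printing Implicit Defensive.
Import Order.TTheory GRing.Theory Num.Theory.
Local Open Scope ring_scope.


Section Det.
Variable R : comNzRingType.

Definition subf (f : nat -> nat -> R) (j : nat) := fun a b : nat => f a.+1 (bump j b).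
Lemma det_nat_expand n (f : nat -> nat -> R) :
  \det (\matrix_(i < n.+1, j < n.+1) f i j) =
  \sum_(j < n.+1) (-1)^+j * f 0%N j * \det (\matrix_(i < n, k < n) subf f j i k).
Proof.
rewrite (expand_det_row _ ord0); apply: eq_bigr => j _.
rewrite mxE /cofactor add0n mulrA [_ * f _ _]mulrC; congr (_ * _ * \det _).
by apply/matrixP => i k; rewrite !mxE /= /bump leq0n add1n.
Qed.

Lemma det_f2 (f : nat -> nat -> R) :
  \det (\matrix_(i < 2, j < 2) f i j) = f 0%N 0%N * f 1%N 1%N - f 0%N 1%N * f 1%N 0%N.
Proof.
have -> := det_nat_expand 1 f; rewrite !big_ord_recl big_ord0 /=.
have E : forall g : nat -> nat -> R, \det (\matrix_(i < 1, k < 1) g i k) = g 0%N 0%N.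
  by move=> g; rewrite det_mx11 mxE.
rewrite !E /subf /bump /=. ring.
Qed.

Definition d3f (g : nat -> nat -> R) := g 0%N 0%N * (g 1%N 1%N * g 2%N 2%N - g 1%N 2%N * g 2%N 1%N)
     - g 0%N 1%N * (g 1%N 0%N * g 2%N 2%N - g 1%N 2%N * g 2%N 0%N)
     + g 0%N 2%N * (g 1%N 0%N * g 2%N 1%N - g 1%N 1%N * g 2%N 0%N).

Lemma det_f3 (f : nat -> nat -> R) :
  \det (\matrix_(i < 3, j < 3) f i j) = d3f f.
Proof.
have -> := det_nat_expand 2 f; rewrite !big_ord_recl big_ord0 /=.
rewrite !det_f2 /subf /bump /d3f /=. ring.
Qed.

Lemma det_f4 (f : nat -> nat -> R) :
  \det (\matrix_(i < 4, j < 4) f i j) =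
  f 0%N 0%N * d3f (subf f 0) - f 0%N 1%N * d3f (subf f 1)
  + f 0%N 2%N * d3f (subf f 2) - f 0%N 3%N * d3f (subf f 3).
Proof.
have -> := det_nat_expand 3 f; rewrite !big_ord_recl big_ord0 /=.
rewrite !det_f3 /=. ring.
Qed.
End Det.
Section Ent.
Variable R : comNzRingType.
Definition ent (M : 'M[R]_4) (i j : nat) : R := M (inord i) (inord j).

Lemma o40 : (ord0 : 'I_4) = inord 0. Proof. by apply/val_inj; rewrite /= inordK. Qed.
Lemma o41 : (lift ord0 (ord0 : 'I_3) : 'I_4) = inord 1. Proof. by apply/val_inj; rewrite /= inordK. Qed.
Lemma o42 : (lift ord0 (lift ord0 (ord0 : 'I_2)) : 'I_4) = inord 2. Proof. by apply/val_inj; rewrite /= inordK. Qed.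
Lemma o43 : (lift ord0 (lift ord0 (lift ord0 (ord0 : 'I_1))) : 'I_4) = inord 3. Proof. by apply/val_inj; rewrite /= inordK. Qed.

Lemma sum4 (F : 'I_4 -> R) : \sum_(k < 4) F k = F (inord 0) + F (inord 1) + F (inord 2) + F (inord 3).
Proof. by rewrite !big_ord_recl big_ord0 o43 o42 o41 o40 addr0 !addrA. Qed.

Lemma ent_mul (A B : 'M[R]_4) i j : ent (A *m B) i j =
  ent A i 0 * ent B 0 j + ent A i 1 * ent B 1 j + ent A i 2 * ent B 2 j + ent A i 3 * ent B 3 j.
Proof. by rewrite /ent mxE sum4. Qed.

Lemma ent_tr (A : 'M[R]_4) i j : ent A^T i j = ent A j i.
Proof. by rewrite /ent mxE. Qed.
Lemma ent_add (A B : 'M[R]_4) i j : ent (A + B) i j = ent A i j + ent B i j.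
Proof. by rewrite /ent mxE. Qed.
Lemma ent_opp (A : 'M[R]_4) i j : ent (- A) i j = - ent A i j.
Proof. by rewrite /ent mxE. Qed.
Lemma ent_scale (a : R) (A : 'M[R]_4) i j : ent (a *: A) i j = a * ent A i j.
Proof. by rewrite /ent mxE. Qed.

Lemma tr4 (A : 'M[R]_4) : \tr A = ent A 0 0 + ent A 1 1 + ent A 2 2 + ent A 3 3.
Proof. by rewrite /mxtrace sum4. Qed.

Lemma mx_ent (A : 'M[R]_4) : A = \matrix_(i < 4, j < 4) ent A i j.
Proof. by apply/matrixP => i j; rewrite mxE /ent !inord_val. Qed.

End Ent.

Section Newton.
Variable R : comNzRingType.
Lemma newton4 (M : 'M[R]_4) : let p k := \tr (M ^+ k) in
  24%:R * \det M = p 1%N ^+ 4 - 6%:R * p 1%N ^+2 * p 2%N + 3%:R * p 2%N ^+ 2 + 8%:R * p 1%N * p 3%N - 6%:R * p 4%N.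
Proof.
move=> p; rewrite /p.
have E2 : M ^+ 2 = M *m M by rewrite expr2 mulmxE.
have E3 : M ^+ 3 = M *m (M *m M) by rewrite !exprS expr0 mulr1 !mulmxE.
have E4 : M ^+ 4 = (M *m M) *m (M *m M) by rewrite !exprS expr0 mulr1 !mulmxE !mulrA.
rewrite expr1 E2 E3 E4 !tr4 !ent_mul.
rewrite [in LHS](mx_ent M) det_f4 /d3f /subf /bump /=.
Time ring.
Qed.
End Newton.

Definition pf (R : comNzRingType) (M : 'M[R]_4) : R :=
  ent M 0 1 * ent M 2 3 - ent M 0 2 * ent M 1 3 + ent M 0 3 * ent M 1 2.

Section Pf.
Variable R : realDomainType.
Implicit Types M A : 'M[R]_4.

Lemma alt_ent M : M^T = - M -> forall i j, ent M j i = - ent M i j.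
Proof. by move=> h i j; rewrite -ent_tr h ent_opp. Qed.

Lemma alt_diag M : M^T = - M -> forall i, ent M i i = 0.
Proof. move=> h i; have := alt_ent h i i; lra. Qed.

Ltac altrw h := rewrite ?(alt_ent h 1 0) ?(alt_ent h 2 0) ?(alt_ent h 3 0) ?(alt_ent h 2 1)
  ?(alt_ent h 3 1) ?(alt_ent h 3 2) ?(alt_diag h 0) ?(alt_diag h 1) ?(alt_diag h 2) ?(alt_diag h 3).

Lemma pf_sq M : M^T = - M -> pf M ^+ 2 = \det M.
Proof.
move=> h; rewrite [in RHS](mx_ent M) det_f4 /d3f /subf /bump /= /pf.
altrw h. ring.
Qed.

Lemma pf_congr M A : M^T = - M -> pf (A^T *m M *m A) = \det A * pf M.
Proof.
move=> h; rewrite [in \det A](mx_ent A) det_f4 /d3f /subf /bump /= /pf.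
rewrite !ent_mul !ent_tr.
altrw h. Time ring.
Qed.
End Pf.

Lemma wedge_pf (E F : 'M[int]_4) : wedge E F = pf (E + F) - pf E - pf F.
Proof.
have -> : wedge E F = ent E 0 1 * ent F 2 3 - ent E 0 2 * ent F 1 3 + ent E 0 3 * ent F 1 2
  + ent E 1 2 * ent F 0 3 - ent E 1 3 * ent F 0 2 + ent E 2 3 * ent F 0 1 by [].
rewrite /pf !ent_add. ring.
Qed.


Section Ent2.
Variable R : comNzRingType.
Definition ent2 (M : 'M[R]_2) (i j : nat) : R := M (inord i) (inord j).
Lemma o20 : (ord0 : 'I_2) = inord 0. Proof. by apply/val_inj; rewrite /= inordK. Qed.
Lemma o21 : (lift ord0 (ord0 : 'I_1) : 'I_2) = inord 1. Proof. by apply/val_inj; rewrite /= inordK. Qed.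
Lemma sum2 (V : nmodType) (F : 'I_2 -> V) : \sum_(k < 2) F k = F (inord 0) + F (inord 1).
Proof. by rewrite !big_ord_recl big_ord0 o21 o20 addr0. Qed.
Lemma ent2_mul (A B : 'M[R]_2) i j : ent2 (A *m B) i j =
  ent2 A i 0 * ent2 B 0 j + ent2 A i 1 * ent2 B 1 j.
Proof. by rewrite /ent2 mxE sum2. Qed.
Lemma tr2 (A : 'M[R]_2) : \tr A = ent2 A 0 0 + ent2 A 1 1.
Proof. by rewrite /mxtrace sum2. Qed.
Lemma mx_ent2 (A : 'M[R]_2) : A = \matrix_(i < 2, j < 2) ent2 A i j.
Proof. by apply/matrixP => i j; rewrite mxE /ent2 !inord_val. Qed.
Lemma det2 (A : 'M[R]_2) : \det A = ent2 A 0 0 * ent2 A 1 1 - ent2 A 0 1 * ent2 A 1 0.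
Proof. by rewrite [in LHS](mx_ent2 A) det_f2. Qed.
End Ent2.

Section Psi.
Variables (R : realType) (psi : 'M[R]_2 -> 'M[R]_4).
Hypotheses (plin : forall r x y, psi (r *: x + y) = r *: psi x + psi y)
  (pmul : forall x y, psi (x *m y) = psi x *m psi y) (p1 : psi 1%:M = 1%:M).

Lemma psi0 : psi 0 = 0.
Proof.
have h := plin 1 0 0; rewrite !scale1r addr0 in h.
have : psi 0 + psi 0 - psi 0 = psi 0 - psi 0 by rewrite -h.
by rewrite addrK subrr => ->.
Qed.
Lemma psiD x y : psi (x + y) = psi x + psi y.
Proof. by have := plin 1 x y; rewrite !scale1r. Qed.
Lemma psiZ r x : psi (r *: x) = r *: psi x.
Proof. by have := plin r x 0; rewrite !addr0 psi0 addr0. Qed.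
Lemma psiX x k : psi (x ^+ k) = psi x ^+ k.
Proof.
elim: k => [|k IH]; first by rewrite !expr0 p1.
by rewrite !exprS -!mulmxE pmul IH.
Qed.

Let d (i j : nat) : 'M[R]_2 := delta_mx (inord i) (inord j).
Let T i j := \tr (psi (d i j)).
Lemma dmul i j k l : (i < 2)%N -> (j < 2)%N -> (k < 2)%N -> (l < 2)%N ->
  d i j *m d k l = if j == k then d i l else 0.
Proof.
move=> hi hj hk hl; case: eqP => [<-|ne]; first by rewrite mul_delta_mx.
rewrite mul_delta_mx_0 //; apply/eqP => /(congr1 val) /=; rewrite !inordK //.
Qed.

Lemma T00 : T 0 0 = 2.
Proof.
have e1 : T 0 0 = T 1 1.
  have m1 : d 0 1 *m d 1 0 = d 0 0 by rewrite mul_delta_mx.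
  have m2 : d 1 0 *m d 0 1 = d 1 1 by rewrite mul_delta_mx.
  rewrite /T -m1 -m2 !pmul; exact: mxtrace_mulC.
have e2 : T 0 0 + T 1 1 = 4%:R.
  rewrite /T -mxtraceD -psiD.
  have -> : d 0 0 + d 1 1 = 1%:M.
    apply/matrixP => i j; rewrite !mxE.
    case: i => [[|[|//]] ?]; case: j => [[|[|//]] ?]; rewrite -!val_eqE /= ?inordK //= ?addr0 ?add0r //.
  by rewrite p1 mxtrace1.
rewrite -e1 in e2; have : (2 : R) * T 0 0 = 2 * 2 by rewrite mulr2n mulrDl mul1r e2; ring. 
by move/(mulfI _); apply; rewrite pnatr_eq0.
Qed.

Lemma Tvals : T 1 1 = 2 /\ T 0 1 = 0 /\ T 1 0 = 0.
Proof.
have e1 : T 0 0 = T 1 1.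
  have m1 : d 0 1 *m d 1 0 = d 0 0 by rewrite mul_delta_mx.
  have m2 : d 1 0 *m d 0 1 = d 1 1 by rewrite mul_delta_mx.
  rewrite /T -m1 -m2 !pmul; exact: mxtrace_mulC.
have n01 : (inord 0 : 'I_2) != inord 1 by rewrite -val_eqE /= !inordK.
split; first by rewrite -e1 T00.
split.
  have m1 : d 0 0 *m d 0 1 = d 0 1 by rewrite mul_delta_mx.
  have m2 : d 0 1 *m d 0 0 = 0 by rewrite mul_delta_mx_0 // eq_sym.
  by rewrite /T -m1 pmul mxtrace_mulC -pmul m2 psi0 mxtrace0.
have m1 : d 1 1 *m d 1 0 = d 1 0 by rewrite mul_delta_mx.
have m2 : d 1 0 *m d 1 1 = 0 by rewrite mul_delta_mx_0.
by rewrite /T -m1 pmul mxtrace_mulC -pmul m2 psi0 mxtrace0.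
Qed.

Lemma tr_psi z : \tr (psi z) = 2 * \tr z.
Proof.
have [t11 [t01 t10]] := Tvals; have t00 := T00.
rewrite [in LHS](matrix_sum_delta z) !sum2 !psiD !psiZ !mxtraceD !mxtraceZ tr2.
rewrite /T /d in t00 t11 t01 t10; rewrite t00 t11 t01 t10 /ent2; ring.
Qed.

Lemma det_psi z : \det (psi z) = \det z ^+ 2.
Proof.
have h24 : (24%:R : R) != 0 by rewrite pnatr_eq0.
apply: (mulfI h24); rewrite newton4 -!psiX !tr_psi.
have E2 : z ^+ 2 = z *m z by rewrite expr2 mulmxE.
have E3 : z ^+ 3 = z *m (z *m z) by rewrite !exprS expr0 mulr1 !mulmxE.
have E4 : z ^+ 4 = (z *m z) *m (z *m z) by rewrite !exprS expr0 mulr1 !mulmxE !mulrA.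
rewrite expr1 E2 E3 E4 !tr2 !ent2_mul det2; ring.
Qed.
End Psi.


Lemma sq_coef (R : realFieldType) (e c p s q : R) : e ^+ 2 = 1 ->
  (forall t, (e + t * c + t ^+ 2 * p) ^+ 2 = (1 + t * s + t ^+ 2 * q) ^+ 2) -> p = e * q.
Proof.
move=> he h.
have h1 := h 1; have h2 := h (-1); have h3 := h 2; have h4 := h (-2).
have A1 : 2 * e * c - 2 * s = 0.
  have : 12 * (2 * e * c - 2 * s) = 0.
    have -> : 12 * (2 * e * c - 2 * s) =
      8 * (((e + 1 * c + 1 ^+ 2 * p) ^+ 2 - (1 + 1 * s + 1 ^+ 2 * q) ^+ 2)
         - ((e + (-1) * c + (-1) ^+ 2 * p) ^+ 2 - (1 + (-1) * s + (-1) ^+ 2 * q) ^+ 2))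
      - (((e + 2 * c + 2 ^+ 2 * p) ^+ 2 - (1 + 2 * s + 2 ^+ 2 * q) ^+ 2)
         - ((e + (-2) * c + (-2) ^+ 2 * p) ^+ 2 - (1 + (-2) * s + (-2) ^+ 2 * q) ^+ 2)) by ring.
    rewrite h1 h2 h3 h4; ring.
  by move/eqP; rewrite mulf_eq0 pnatr_eq0 /= => /eqP.
have A2 : c ^+ 2 + 2 * e * p - s ^+ 2 - 2 * q = 0.
  have : 24 * (c ^+ 2 + 2 * e * p - s ^+ 2 - 2 * q) = 0.
    have -> : 24 * (c ^+ 2 + 2 * e * p - s ^+ 2 - 2 * q) =
      16 * (((e + 1 * c + 1 ^+ 2 * p) ^+ 2 - (1 + 1 * s + 1 ^+ 2 * q) ^+ 2)
         + ((e + (-1) * c + (-1) ^+ 2 * p) ^+ 2 - (1 + (-1) * s + (-1) ^+ 2 * q) ^+ 2))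
      - (((e + 2 * c + 2 ^+ 2 * p) ^+ 2 - (1 + 2 * s + 2 ^+ 2 * q) ^+ 2)
         + ((e + (-2) * c + (-2) ^+ 2 * p) ^+ 2 - (1 + (-2) * s + (-2) ^+ 2 * q) ^+ 2))
      - 30 * (e ^+ 2 - 1) by ring.
    rewrite h1 h2 h3 h4 he; ring.
  by move/eqP; rewrite mulf_eq0 pnatr_eq0 /= => /eqP.
have hs : s = e * c.
  have : 2 * (e * c - s) = 0 by rewrite -A1; ring.
  by move/eqP; rewrite mulf_eq0 pnatr_eq0 /= subr_eq0 => /eqP ->.
rewrite hs in A2.
have : 2 * (e * p - q) = 0.
  rewrite -A2; have -> : (e * c) ^+ 2 = e ^+ 2 * c ^+ 2 by ring.
  rewrite he; ring.
move/eqP; rewrite mulf_eq0 pnatr_eq0 /= subr_eq0 => /eqP <-.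
by rewrite mulrA -expr2 he mul1r.
Qed.

Section Key.
Variables (R : realType) (psi : 'M[R]_2 -> 'M[R]_4).
Hypotheses (plin : forall r x y, psi (r *: x + y) = r *: psi x + psi y)
  (pmul : forall x y, psi (x *m y) = psi x *m psi y) (p1 : psi 1%:M = 1%:M).
Variable E0 : 'M[R]_4.
Hypotheses (E0alt : E0^T = - E0) (E0det : \det E0 = 1).

Lemma pf_lin (X Y : 'M[R]_4) t :
  pf (X + t *: Y) = pf X + t * (pf (X + Y) - pf X - pf Y) + t ^+ 2 * pf Y.
Proof. rewrite /pf !ent_add !ent_scale; ring. Qed.

Lemma det_1ty (y : 'M[R]_2) t : \det (1%:M + t *: y) = 1 + t * \tr y + t ^+ 2 * \det y.
Proof.
rewrite !det2 tr2 /ent2 !mxE -!val_eqE /= !inordK //=; ring.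
Qed.

Lemma key y : (E0 *m psi y)^T = - (E0 *m psi y) -> pf (E0 *m psi y) = pf E0 * \det y.
Proof.
move=> halt.
have he : pf E0 ^+ 2 = 1 by rewrite pf_sq.
apply: (@sq_coef _ (pf E0) (pf (E0 + E0 *m psi y) - pf E0 - pf (E0 *m psi y)) _ (\tr y) _ he) => t.
have hM : E0 *m psi (1%:M + t *: y) = E0 + t *: (E0 *m psi y).
  by rewrite (psiD plin) p1 (psiZ plin) mulmxDr mulmx1 scalemxAr.
have altM : (E0 + t *: (E0 *m psi y))^T = - (E0 + t *: (E0 *m psi y)).
  by rewrite linearD linearZ /= halt E0alt opprD scalerN.
rewrite -pf_lin pf_sq // -hM det_mulmx E0det mul1r (det_psi plin pmul p1) det_1ty.
by [].
Qed.
End Key.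


Section Orient.
Variables (R : realType) (J E : 'M[R]_4).
Hypotheses (JJ : J *m J = - 1%:M) (Ealt : E^T = - E) (EJ : J^T *m E *m J = E)
  (Epos : forall v : 'cV[R]_4, v != 0 -> 0 < ((J *m v)^T *m E *m v) ord0 ord0).

Definition B (x y : 'cV[R]_4) : R := (x^T *m E *m y) ord0 ord0.

Lemma BDl x y z : B (x + y) z = B x z + B y z.
Proof. by rewrite /B linearD /= !mulmxDl mxE. Qed.
Lemma BDr x y z : B x (y + z) = B x y + B x z.
Proof. by rewrite /B !mulmxDr mxE. Qed.
Lemma BZl r x z : B (r *: x) z = r * B x z.
Proof. by rewrite /B linearZ /= -!scalemxAl mxE. Qed.
Lemma BZr r x z : B x (r *: z) = r * B x z.
Proof. by rewrite /B -!scalemxAr mxE. Qed.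
Lemma BNl x z : B (- x) z = - B x z.
Proof. by rewrite -scaleN1r BZl mulN1r. Qed.
Lemma BNr x z : B x (- z) = - B x z.
Proof. by rewrite -scaleN1r BZr mulN1r. Qed.
Lemma BJJ x y : B (J *m x) (J *m y) = B x y.
Proof.
rewrite /B trmx_mul.
have -> : x^T *m J^T *m E *m (J *m y) = x^T *m (J^T *m E *m J) *m y by rewrite !mulmxA.
by rewrite EJ.
Qed.
Lemma Balt x y : B y x = - B x y.
Proof.
rewrite /B.
have -> : (y^T *m E *m x) ord0 ord0 = ((y^T *m E *m x)^T) ord0 ord0 by rewrite [RHS]mxE.
by rewrite !trmx_mul trmxK Ealt mulNmx mulmxN mulmxA mxE.
Qed.
Lemma Bxx x : B x x = 0.
Proof. have := Balt x x; lra. Qed.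
Lemma Jlin r (x y : 'cV[R]_4) : J *m (r *: x + y) = r *: (J *m x) + J *m y.
Proof. by rewrite mulmxDr scalemxAr. Qed.
Lemma JJv (x : 'cV[R]_4) : J *m (J *m x) = - x.
Proof. by rewrite mulmxA JJ mulNmx mul1mx. Qed.

Definition H (x : 'cV[R]_4) := B (J *m x) x.
Lemma H_ge0 (x : 'cV[R]_4) : 0 <= H x.
Proof.
have [->|nz] := eqVneq x 0; last by apply/ltW/Epos.
by rewrite /H /B !mulmx0 mxE.
Qed.

Lemma CS (u w : 'cV[R]_4) : B u w ^+ 2 + B u (J *m w) ^+ 2 <= H u * H w.
Proof.
have [->|nz] := eqVneq u 0.
  by rewrite /H /B /= !trmx0 !mul0mx !mulmx0 !mxE mul0r expr0n /= addr0.
have hpos : 0 < H u by apply: Epos.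
set h := H u; set p := B u w; set q := B u (J *m w).
pose x := h *: w + (q *: u + p *: (J *m u)).
have Jx : J *m x = h *: (J *m w) + (q *: (J *m u) + p *: (- u)).
  by rewrite /x !mulmxDr -!scalemxAr JJv.
have hx : H x = h * (h * H w - p ^+ 2 - q ^+ 2).
  rewrite /H Jx /x !BDl !BDr !BZl !BZr !BNl.
  have f1 : B (J *m w) u = - q by rewrite Balt.
  have f2 : B (J *m w) (J *m u) = - p by rewrite BJJ Balt.
  have f3 : B (J *m u) w = - q by rewrite -BJJ JJv BNl.
  have f4 : B (J *m u) (J *m u) = 0 by rewrite Bxx.
  have f5 : B u (J *m u) = - h by rewrite Balt.
  have f6 : B (J *m u) u = h by [].
  rewrite f1 f2 f3 f4 f5 f6 !Bxx -/p.
  move: (B (J *m w) w) => z; clearbody x h p q; ring.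
have := H_ge0 x; rewrite hx => hge.
have : 0 <= h * H w - p ^+ 2 - q ^+ 2.
  by rewrite -(pmulr_rge0 _ hpos).
lra.
Qed.

Lemma ent_AEA (A : 'M[R]_4) i j :
  ent (A^T *m E *m A) i j = B (col (inord i) A) (col (inord j) A).
Proof.
rewrite /ent /B !mxE; apply: eq_bigr => l _; rewrite !mxE; congr (_ * _).
by apply: eq_bigr => k _; rewrite !mxE.
Qed.

Lemma col_cb (u w : 'cV[R]_4) :
  [/\ col (inord 0) (cbasis_mx J u w) = u, col (inord 1) (cbasis_mx J u w) = J *m u,
      col (inord 2) (cbasis_mx J u w) = w & col (inord 3) (cbasis_mx J u w) = J *m w].
Proof.
have o1 : forall l : 'I_1, l = ord0 by move=> l; apply/val_inj; case: l => [[]].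
split; apply/matrixP => k l; rewrite !mxE inordK // (o1 l) //.
Qed.

Lemma pf_cb (u w : 'cV[R]_4) :
  pf ((cbasis_mx J u w)^T *m E *m cbasis_mx J u w) = H u * H w - B u w ^+ 2 - B u (J *m w) ^+ 2.
Proof.
have [c0 c1 c2 c3] := col_cb u w.
rewrite /pf !ent_AEA c0 c1 c2 c3.
have f1 : B u (J *m u) = - H u by rewrite Balt.
have f2 : B (J *m u) (J *m w) = B u w by rewrite BJJ.
have f3 : B (J *m u) w = - B u (J *m w) by rewrite -BJJ JJv BNl.
have f4 : B w (J *m w) = - H w by rewrite Balt.
rewrite f1 f2 f3 f4 /H; ring.
Qed.

Lemma exists_pos : exists u w : 'cV[R]_4, 0 < H u * H w - B u w ^+ 2 - B u (J *m w) ^+ 2.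
Proof.
pose e (i : nat) : 'cV[R]_4 := delta_mx (inord i) ord0.
pose u := e 0%N.
have unz : u != 0.
  apply/eqP => /matrixP /(_ (inord 0) ord0); rewrite !mxE eqxx /=.
  by move/eqP; rewrite oner_eq0.
have hpos : 0 < H u by apply: Epos.
pose x (w : 'cV[R]_4) := H u *: w + (B u (J *m w) *: u + B u w *: (J *m u)).
have orth : forall w, B u (x w) = 0 /\ B u (J *m x w) = 0.
  move=> w; rewrite /x !BDr !BZr !mulmxDr -!scalemxAr !BDr !BZr JJv BNr !Bxx.
  have f1 : B u (J *m u) = - H u by rewrite Balt.
  rewrite f1; split; ring.
have key : forall w, x w != 0 -> 0 < H u * H (x w) - B u (x w) ^+ 2 - B u (J *m x w) ^+ 2.
  move=> w nz; have [-> ->] := orth w.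
  have := Epos nz; rewrite -/(H (x w)) => hx.
  rewrite expr0n /= !subr0; exact: mulr_gt0.
have [nz1|z1] := boolP (x (e 1%N) != 0); first by exists u, (x (e 1%N)); apply: key.
have [nz2|z2] := boolP (x (e 2%N) != 0); first by exists u, (x (e 2%N)); apply: key.
exfalso.
move: z1 z2; rewrite !negbK.
move=> /eqP /matrixP z1 /eqP /matrixP z2.
have a := z1 (inord 1) ord0; have b := z1 (inord 2) ord0; have c := z2 (inord 2) ord0.
rewrite /x !mxE -!val_eqE /= !inordK // /= ?mulr1 ?mulr0 ?add0r ?addr0 in a b c.
move: a b c; set j1 := \sum_j _; set j2 := \sum_j _.
set h := H u; set p1 := B u (e 1%N); set p2 := B u (e 2%N) => a b c.
have : h * p1 = 0.
  have -> : h * p1 = (h + p2 * j2) * p1 - p2 * (p1 * j2) by ring.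
  by rewrite c b; ring.
move/eqP; rewrite mulf_eq0 => /orP [/eqP h0|/eqP p0]; first by move: hpos; rewrite -/h h0 ltxx.
by rewrite p0 mul0r addr0 in a; move: hpos; rewrite -/h a ltxx.
Qed.

Lemma orient_pf : pf E = 1 \/ pf E = -1 -> (complex_orientation J)%:~R * pf E = 1.
Proof.
have pfA : forall u w, pf ((cbasis_mx J u w)^T *m E *m cbasis_mx J u w) = \det (cbasis_mx J u w) * pf E.
  by move=> u w; apply: pf_congr.
rewrite /complex_orientation; case=> he.
  have [u [w pos]] := exists_pos.
  rewrite asboolT; first by rewrite he mulr1.
  exists u, w; move: pos; rewrite -pf_cb pfA he mulr1 //.
rewrite asboolF; first by rewrite he; simpl; rewrite mulrNN mulr1 //.
move=> [u [w pos]].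
have := CS u w; rewrite -subr_ge0.
have -> : H u * H w - (B u w ^+ 2 + B u (J *m w) ^+ 2) = H u * H w - B u w ^+ 2 - B u (J *m w) ^+ 2 by ring.
rewrite -pf_cb pfA he; lra.
Qed.
End Orient.


Section IntMx.
Variable R : realType.
Lemma intmxE m n (M : 'M[int]_(m, n)) : intmx R M = map_mx ( *~%R (1 : R)) M.
Proof. by []. Qed.
Lemma intmxM m n p (A : 'M[int]_(m, n)) (B : 'M[int]_(n, p)) :
  intmx R (A *m B) = intmx R A *m intmx R B.
Proof. by rewrite !intmxE map_mxM. Qed.
Lemma intmxD m n (A B : 'M[int]_(m, n)) : intmx R (A + B) = intmx R A + intmx R B.
Proof. by rewrite !intmxE map_mxD. Qed.
Lemma intmxN m n (A : 'M[int]_(m, n)) : intmx R (- A) = - intmx R A.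
Proof. by rewrite !intmxE map_mxN. Qed.
Lemma intmxZ m n (k : int) (A : 'M[int]_(m, n)) : intmx R (k *: A) = k%:~R *: intmx R A.
Proof. by rewrite !intmxE map_mxZ. Qed.
Lemma intmxT m n (A : 'M[int]_(m, n)) : intmx R A^T = (intmx R A)^T.
Proof. by rewrite !intmxE map_trmx. Qed.
Lemma intmx1 n : intmx R (1%:M : 'M[int]_n) = 1%:M.
Proof. by rewrite !intmxE map_mx1. Qed.
Lemma intmxS n (k : int) : intmx R (k%:M : 'M[int]_n) = (k%:~R)%:M.
Proof. by rewrite !intmxE map_scalar_mx. Qed.
Lemma intmx_inj m n : injective (@intmx R m n).
Proof.
move=> A B /matrixP h; apply/matrixP => i j; have := h i j; rewrite !mxE; exact: intr_inj.
Qed.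
Lemma intmx_det n (A : 'M[int]_n) : \det (intmx R A) = (\det A)%:~R.
Proof. by rewrite intmxE det_map_mx. Qed.
Lemma intmx_adj n (A : 'M[int]_n) : \adj (intmx R A) = intmx R (\adj A).
Proof. by rewrite !intmxE map_mx_adj. Qed.
Lemma pf_int (M : 'M[int]_4) : pf (intmx R M) = (pf M)%:~R.
Proof. by rewrite /pf /ent /intmx !mxE intrD intrB !intrM. Qed.
End IntMx.

Section Comm.
Variable R : comNzRingType.
Lemma comb_comm (x y : 'M[R]_2) : x *m y = y *m x ->
  forall r0 r1 r2 r3 s0 s1 s2 s3,
  let c a0 a1 a2 a3 := a0%:M + a1 *: x + a2 *: y + a3 *: (x *m y) in
  c r0 r1 r2 r3 *m c s0 s1 s2 s3 = c s0 s1 s2 s3 *m c r0 r1 r2 r3.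
Proof.
move=> hxy r0 r1 r2 r3 s0 s1 s2 s3 c.
have hxy' : GRing.comm x y by rewrite /GRing.comm -!mulmxE.
have cZ : forall (X Y : 'M[R]_2) a, GRing.comm X Y -> GRing.comm X (a *: Y).
  move=> X Y a h; rewrite -mul_scalar_mx mulmxE; apply: commrM => //.
  by rewrite /GRing.comm -!mulmxE scalar_mxC.
have cS : forall (X : 'M[R]_2) a, GRing.comm X a%:M.
  by move=> X a; rewrite /GRing.comm -!mulmxE scalar_mxC.
have cc : forall X : 'M[R]_2, GRing.comm X x -> GRing.comm X y ->
    forall a0 a1 a2 a3, GRing.comm X (c a0 a1 a2 a3).
  move=> X hx hy a0 a1 a2 a3; rewrite /c.
  have hxy2 : GRing.comm X (x *m y) by rewrite mulmxE; apply: commrM.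
  apply: commrD; first apply: commrD; first apply: commrD.
  - exact: cS.
  - exact: cZ.
  - exact: cZ.
  - exact: cZ.
have h : GRing.comm (c s0 s1 s2 s3) (c r0 r1 r2 r3).
  apply: (cc); apply: commr_sym; apply: (cc) => //; exact: commr_sym.
by rewrite !mulmxE.
Qed.
End Comm.

Section RN.
Variable R : realType.
Implicit Types y z : 'M[R]_2.
Lemma ent2_1 : ent2 (1%:M : 'M[R]_2) 0 0 = 1 /\ ent2 (1%:M : 'M[R]_2) 1 1 = 1 /\
  ent2 (1%:M : 'M[R]_2) 0 1 = 0 /\ ent2 (1%:M : 'M[R]_2) 1 0 = 0.
Proof. by rewrite /ent2 !mxE -!val_eqE /= !inordK. Qed.
Lemma ent2_add y z i j : ent2 (y + z) i j = ent2 y i j + ent2 z i j.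
Proof. by rewrite /ent2 mxE. Qed.
Lemma rn2_1y y : rnorm2 1%:M y = rtr y.
Proof.
have [a [b [c d]]] := ent2_1.
rewrite /rnorm2 /rnorm /rtr !det2 tr2 !ent2_add a b c d.
move: (ent2 y 0 0) (ent2 y 1 1) (ent2 y 0 1) (ent2 y 1 0) => p q r s; ring.
Qed.
Lemma rn2_y1 y : rnorm2 y 1%:M = rtr y.
Proof.
have [a [b [c d]]] := ent2_1.
by rewrite /rnorm2 /rnorm /rtr !det2 tr2 !ent2_add a b c d; ring.
Qed.
Lemma rn2_11 : rnorm2 (1%:M : 'M[R]_2) 1%:M = 2.
Proof. by rewrite rn2_1y /rtr mxtrace1. Qed.
Lemma rn2_yy y : rnorm2 y y = 2 * rnorm y.
Proof. by rewrite /rnorm2 /rnorm !det2 !ent2_add; ring. Qed.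
Lemma rn2C y z : rnorm2 y z = rnorm2 z y.
Proof. by rewrite /rnorm2 (addrC y z); ring. Qed.
End RN.


Lemma det3 (R : comNzRingType) (M : 'M[R]_3) : \det M = d3f (fun i j => M (inord i) (inord j)).
Proof.
set f := fun i j : nat => M (inord i) (inord j).
have -> : M = \matrix_(i < 3, j < 3) f i j by apply/matrixP => i j; rewrite mxE /f !inord_val.
by rewrite det_f3.
Qed.

Unset Implicit Arguments.
Theorem mainTheorem7 (R : realType) (J : 'M[R]_4) (E0 a b : 'M[int]_4)
  (psi : 'M[R]_2 -> 'M[R]_4) (ya yb : 'M[R]_2) :
  complex_structure J ->
  principal_polarization J E0 ->
  simple_torus J ->
  end_ring_basis J a b ->
  primitive_end J a -> primitive_end J b ->
  rosati_invariant R E0 a -> rosati_invariant R E0 b ->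
  real_splitting a b psi ->
  psi ya = intmx R a -> psi yb = intmx R b ->
  let L := three E0 (E0 *m a) (E0 *m b) in
  [/\ NS_lattice_basis J L,
      intmx R (NS_gram J L) =
        \matrix_(i < 3, j < 3)
          three (three 2 (rtr ya) (rtr yb) j)
                (three (rtr ya) (2 * rnorm ya) (rnorm2 ya yb) j)
                (three (rtr yb) (rnorm2 ya yb) (2 * rnorm yb) j) i
    & (\det (NS_gram J L))%:~R = 1 / 2 * \det (Sdelta ya yb)].
Proof.
move=> JJ [[E0alt EJ] E0pos E0det] _ [ea eb endiff indep] _ _ hra hrb
  [[plin pmul p1 pinj] [pin psurj]] hya hyb L.
set E := intmx R E0; set A := intmx R a; set Bm := intmx R b.
have Ealt : E^T = - E by rewrite /E -intmxT E0alt intmxN.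
have Edet : \det E = 1 by rewrite /E intmx_det E0det.
have Eunit : E \in unitmx by rewrite unitmxE Edet unitr1.
have ros : forall x, invmx E *m x^T *m E = x -> E *m x = x^T *m E.
  by move=> x h; rewrite -[in LHS]h !mulmxA mulmxV // mul1mx.
have rosA := ros _ hra; have rosB := ros _ hrb.
have altA : (E *m A)^T = - (E *m A) by rewrite trmx_mul Ealt mulmxN -rosA.
have altB : (E *m Bm)^T = - (E *m Bm) by rewrite trmx_mul Ealt mulmxN -rosB.
have pfE : pf E = 1 \/ pf E = -1.
  have h : pf E0 ^+ 2 = 1 by rewrite pf_sq // E0det.
  move/eqP: h; rewrite sqrf_eq1 => /orP [/eqP h|/eqP h]; [left|right];
    by rewrite /E pf_int h.
have hor : (complex_orientation J)%:~R * pf E = 1 by apply: orient_pf.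
have gram : forall (x z : 'M[int]_4) (yx yz : 'M[R]_2),
    psi yx = intmx R x -> psi yz = intmx R z ->
    (E *m intmx R x)^T = - (E *m intmx R x) -> (E *m intmx R z)^T = - (E *m intmx R z) ->
    ((inter J (E0 *m x) (E0 *m z))%:~R : R) = rnorm2 yx yz.
  move=> x z yx yz hx hz ax az.
  rewrite /inter intrM wedge_pf !intrB -!pf_int !intmxD !intmxM -/E -hx -hz -mulmxDr -(psiD plin).
  have axz : (E *m psi (yx + yz))^T = - (E *m psi (yx + yz)).
    by rewrite (psiD plin) mulmxDr linearD /= hx hz ax az opprD.
  rewrite !(key plin pmul p1 Ealt Edet) ?hx ?hz //.
  rewrite /rnorm2 /rnorm.
  have -> : (complex_orientation J)%:~R * (pf E * \det (yx + yz) - pf E * \det yx - pf E * \det yz)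
    = ((complex_orientation J)%:~R * pf E) * (\det (yx + yz) - \det yx - \det yz) by ring.
  by rewrite hor mul1r.
pose xs := three 1%:M a b; pose ys := three 1%:M ya yb.
have hL : forall i, L i = E0 *m xs i.
  by case=> [[|[|[|//]]] hi]; rewrite /L /xs /= ?mulmx1.
have hps : forall i, psi (ys i) = intmx R (xs i).
  by case=> [[|[|[|//]]] hi]; rewrite /xs /ys /= ?p1 ?intmx1.
have halt : forall i, (E *m intmx R (xs i))^T = - (E *m intmx R (xs i)).
  by case=> [[|[|[|//]]] hi]; rewrite /xs /= ?intmx1 ?mulmx1.
have G : forall i j, ((NS_gram J L) i j)%:~R = rnorm2 (ys i) (ys j).
  by move=> i j; rewrite mxE !hL; exact: (gram _ _ _ _ (hps i) (hps j) (halt i) (halt j)).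
have part2 : intmx R (NS_gram J L) =
        \matrix_(i < 3, j < 3)
          three (three 2 (rtr ya) (rtr yb) j)
                (three (rtr ya) (2 * rnorm ya) (rnorm2 ya yb) j)
                (three (rtr yb) (rnorm2 ya yb) (2 * rnorm yb) j) i.
  apply/matrixP => i j; rewrite [LHS]mxE G mxE.
  case: i => [[|[|[|//]]] hi]; case: j => [[|[|[|//]]] hj];
    rewrite /ys /= ?rn2_11 ?rn2_1y ?rn2_y1 ?rn2_yy //; exact: rn2C.
have part3 : (\det (NS_gram J L))%:~R = 1 / 2 * \det (Sdelta ya yb).
  rewrite -intmx_det part2 det3 det2 /d3f /ent2 !mxE /three !inordK //=.
  rewrite /rdelta !rn2_yy; field.
  by [].
have hend : forall i, is_end J (xs i).
  by case=> [[|[|[|//]]] hi]; rewrite /xs /is_end /= ?intmx1 ?mul1mx ?mulmx1.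
have adjE : \adj E *m E = 1%:M by rewrite mul_adj_mx Edet.
have Eadj : E *m \adj E = 1%:M by rewrite mul_mx_adj Edet.
have Ecan : forall X Y : 'M[R]_4, E *m X = E *m Y -> X = Y.
  by move=> X Y h; rewrite -[X]mul1mx -adjE -mulmxA h mulmxA adjE mul1mx.
have adjE0 : \adj E0 *m E0 = 1%:M by rewrite mul_adj_mx E0det.
have E0adj : E0 *m \adj E0 = 1%:M by rewrite mul_mx_adj E0det.
have Ji : J *m (- J) = 1%:M by rewrite mulmxN JJ opprK.
have EJ' : forall X : 'M[R]_4, J^T *m X *m J = X -> X *m J = (- J)^T *m X.
  move=> X h.
  have -> : (- J)^T *m X = (- J)^T *m (J^T *m X *m J) by rewrite h.
  by rewrite !mulmxA -trmx_mul Ji trmx1 mul1mx.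
have nocomm : Bm *m A <> A *m Bm.
  move=> hBA.
  have cy : ya *m yb = yb *m ya.
    by apply: pinj; rewrite !pmul hya hyb -/A -/Bm hBA.
  have psiS : forall r : R, psi r%:M = r%:M.
    by move=> r; rewrite -scalemx1 (psiZ plin) p1 scalemx1.
  have comb : forall x : 'M[R]_2, exists r0 r1 r2 r3,
      x = r0%:M + r1 *: ya + r2 *: yb + r3 *: (ya *m yb).
    move=> x; have [r0 [r1 [r2 [r3 h]]]] := pin x; exists r0, r1, r2, r3.
    apply: pinj; rewrite h !(psiD plin) !(psiZ plin) psiS pmul hya hyb.
    by rewrite intmxM.
  have [r0 [r1 [r2 [r3 h1]]]] := comb (delta_mx (inord 0) (inord 1)).
  have [s0 [s1 [s2 [s3 h2]]]] := comb (delta_mx (inord 1) (inord 0)).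
  have := comb_comm cy r0 r1 r2 r3 s0 s1 s2 s3; rewrite /= -h1 -h2 !mul_delta_mx.
  move/matrixP/(_ (inord 0) (inord 0)); rewrite !mxE -!val_eqE /= !inordK //=.
    by move/eqP; rewrite oner_eq0.
have o3 : forall i : 'I_3, [\/ i = ord0, i = lift ord0 ord0 | i = lift ord0 (lift ord0 ord0)].
  case=> [[|[|[|//]]] hi]; [apply: Or31|apply: Or32|apply: Or33]; exact: val_inj.
have sum3 : forall k : 'I_3 -> int, \sum_i k i *: L i =
    E0 *m (k ord0 *: 1%:M + k (lift ord0 ord0) *: a + k (lift ord0 (lift ord0 ord0)) *: b).
  move=> k; rewrite !big_ord_recl big_ord0 addr0 /L /= !mulmxDr -!scalemxAr mulmx1 addrA.
  by [].
have part1 : NS_lattice_basis J L.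
  split.
  - move=> i; rewrite hL; split.
      apply: intmx_inj; rewrite intmxT intmxN intmxM; exact: halt.
    rewrite intmxM -/E.
    by rewrite -!mulmxA (hend i) !mulmxA EJ.
  - move=> E' [E'alt E'J].
    pose f := \adj E0 *m E'.
    have E0f : E0 *m f = E' by rewrite /f mulmxA E0adj mul1mx.
    have fr : intmx R f = \adj E *m intmx R E' by rewrite /f intmxM intmx_adj.
    have fend : is_end J f.
      rewrite /is_end fr; apply: Ecan.
      rewrite !mulmxA Eadj mul1mx (EJ' _ E'J) (EJ' _ EJ) -!mulmxA.
      by rewrite -/E (mulmxA E) Eadj mul1mx.
    have [k0 [k1 [k2 [k3 hf]]]] := (endiff f).1 fend.
    have k30 : k3 = 0.
      apply/eqP; apply/negPn/negP => nz.
      apply: nocomm.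
      set X := intmx R f.
      have EX : intmx R E' = E *m X by rewrite -E0f intmxM.
      have altX : (E *m X)^T = - (E *m X) by rewrite -EX -intmxT E'alt intmxN.
      have hX : X = (k0%:~R)%:M + k1%:~R *: A + k2%:~R *: Bm + k3%:~R *: (A *m Bm).
        by rewrite /X hf !intmxD !intmxZ intmxS intmxM.
      have tA : A^T *m E = E *m A by rewrite -rosA.
      have tB : Bm^T *m E = E *m Bm by rewrite -rosB.
      have XT : X^T *m E = E *m ((k0%:~R)%:M + k1%:~R *: A + k2%:~R *: Bm + k3%:~R *: (Bm *m A)).
        rewrite hX !linearD !linearZ /= tr_scalar_mx trmx_mul !mulmxDl.
        rewrite -!scalemxAl mul_scalar_mx mul_mx_scalar tA tB.
        by rewrite -mulmxA tA !mulmxA tB.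
      have : X^T *m E = E *m X.
        have := altX; rewrite trmx_mul Ealt mulmxN => /eqP; rewrite eqr_opp => /eqP //.
      rewrite XT => /Ecan; rewrite hX => /addrI /scalerI -> //.
      by rewrite intr_eq0.
    exists (fun i => three k0 k1 k2 i).
    rewrite sum3 /= -E0f hf k30 scale0r addr0 scalemx1.
    by [].
  - move=> k hk i.
    rewrite sum3 in hk.
    have := congr1 (mulmx (\adj E0)) hk; rewrite mulmxA adjE0 mul1mx mulmx0 scalemx1 => hk'.
    have := indep (k ord0) (k (lift ord0 ord0)) (k (lift ord0 (lift ord0 ord0))) 0.
    rewrite scale0r addr0 => /(_ hk') [h0 h1 h2 _].
    by case: (o3 i) => ->.
by split.

Qed.
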